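(* Let $(X,b,m)$ be a connected weighted graph satisfying conditions (B) and (M), and let $D\subset X$ be non-empty. Then there exists a Voronoi decomposition of $X$ with centers from $D$. Moreover, whenever $R=\mathrm{Covr}(D)$ is finite, every Voronoi decomposition $(V_p)_{p\in D}$ of $X$ with centers from $D$ satisfies $V_p\subset B_R(p)$ for all $p\in D$.
   Context: A weighted graph $(X,b,m)$: $X$ countable, $b:X\times X\to[0,\infty)$ symmetric with $b(x,x)=0$ and $\sum_y b(x,y)<\infty$, $m:X\to(0,\infty)$. Condition (B): $\sup_x\frac{1}{m(x)}\sum_y b(x,y)<\infty$. Condition (M): $\sup_x m(x)<\infty$. A path from $x_0$ to $x_k$ is $\gamma=(x_0,\dots,x_k)$ with $b(x_j,x_{j+1})>0$, of length $L(\gamma)=\sum_{j=0}^{k-1}1/b(x_j,x_{j+1})$ (trivial paths have length $0$); it lies in a set $V$ if all $x_j\in V$. Connected means any two points are joined by a path; $d(x,y)$ is the infimum of lengths of paths from $x$ to $y$; $B_r(x):=\{y:d(x,y)\le r\}$. $\mathrm{Covr}(D):=\inf\{R>0:\bigcup_{p\in D}B_R(p)=X\}\in[0,\infty]$. A Voronoi decomposition of $X$ with centers from $D$ is a pairwise disjoint family $(V_p)_{p\in D}$ of subsets of $X$ such that: (V1) for each $p\in D$, $p\in V_p$, and for every $x\in V_p$ there is a path from $p$ to $x$ lying in $V_p$ with length $d(p,x)$; (V2) for each $p\in D$ and $x\in V_p$, $d(p,x)\le d(q,x)$ for all $q\in D$; (V3) $\bigcup_{p\in D}V_p=X$. *)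

(* Defs.v *)
From HB Require Import structures.
From mathcomp Require Import all_boot all_order all_algebra.
From mathcomp Require Import all_classical all_reals.
From mathcomp Require Import ereal esum.
Set Implicit Arguments. Unset Strict Implicit. Unset Printing Implicit Defensive.
Import Order.TTheory GRing.Theory Num.Theory.
Local Open Scope classical_set_scope.
Local Open Scope ring_scope.

Section WeightedGraphs.
Variables (R : realType) (X : countType).
Implicit Types (b : X -> X -> R) (m : X -> R).

Definition weighted_graph b m : Prop :=
  [/\ (forall x y, 0 <= b x y),
      (forall x y, b x y = b y x),
      (forall x, b x x = 0),
      (forall x, (\esum_(y in [set: X]) (b x y)%:E < +oo)%E) &
      (forall x, 0 < m x)].

Definition cond_B b m : Prop :=
  exists C : R, forall x,
    (((m x)^-1)%:E * (\esum_(y in [set: X]) (b x y)%:E) <= C%:E)%E.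

Definition cond_M m : Prop := exists C : R, forall x, m x <= C.

(* A path from x to y: the vertex sequence x :: s, with b > 0 between
   consecutive vertices, ending at y (s = [::] is the trivial path, x = y). *)
Definition is_path b (x : X) (s : seq X) (y : X) : Prop :=
  path (fun u v => 0 < b u v) x s /\ last x s = y.

Definition plen b (x : X) (s : seq X) : R :=
  \sum_(e <- zip (x :: s) s) (b e.1 e.2)^-1.

Definition path_in (x : X) (s : seq X) (V : set X) : Prop :=
  forall z, z \in x :: s -> V z.

Definition connected_graph b : Prop :=
  forall x y, exists s, is_path b x s y.

Definition gdist b (x y : X) : R :=
  inf [set plen b x s | s in [set s | is_path b x s y]].

Definition gball b (x : X) (r : R) : set X := [set y | gdist b x y <= r].

Definition Covr b (D : set X) : \bar R :=
  ereal_inf [set r%:E | r in [set r : R | 0 < r /\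
                 \bigcup_(p in D) gball b p r = [set: X]]].

Definition voronoi b (D : set X) (V : X -> set X) : Prop :=
  [/\ (forall p q, D p -> D q -> p <> q -> V p `&` V q = set0),
      (forall p, D p -> V p p /\
         forall x, V p x -> exists s, [/\ is_path b p s x, path_in p s (V p)
                                     & plen b p s = gdist b p x]),
      (forall p, D p -> forall x, V p x -> forall q, D q -> gdist b p x <= gdist b q x) &
      \bigcup_(p in D) V p = [set: X]].

End WeightedGraphs.

(* Main.v *)
Require Import Defs.
From HB Require Import structures.
From mathcomp Require Import all_boot all_order all_algebra.
From mathcomp Require Import all_classical all_reals.
From mathcomp Require Import finmap ereal esum lra.
Import Order.TTheory GRing.Theory Num.Theory.
Local Open Scope classical_set_scope.
Local Open Scope ring_scope.
Set Implicit Arguments. Unset Strict Implicit.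

Section Aux.
Variables (R : realType) (X : countType) (b : X -> X -> R).

Definition pe := fun u v => 0 < b u v.

Lemma plen_nil x : plen b x [::] = 0.
Proof. by rewrite /plen big_nil. Qed.

Lemma plen_cons x y s : plen b x (y :: s) = (b x y)^-1 + plen b y s.
Proof. by rewrite /plen /= big_cons. Qed.

Lemma plen_cat x s1 s2 :
  plen b x (s1 ++ s2) = plen b x s1 + plen b (last x s1) s2.
Proof.
elim: s1 x => [|y s IH] x /=; first by rewrite plen_nil add0r.
by rewrite !plen_cons IH addrA.
Qed.

Lemma plen_ge0 x s : path pe x s -> 0 <= plen b x s.
Proof.
elim: s x => [|y s IH] x /=; first by rewrite plen_nil.
move=> /andP[h hp]; rewrite plen_cons addr_ge0 ?IH //.
by rewrite invr_ge0 ltW.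
Qed.

Lemma plen_gt0 x y s : path pe x (y :: s) -> 0 < plen b x (y :: s).
Proof.
move=> /= /andP[h hp]; rewrite plen_cons.
have := plen_ge0 hp; have : 0 < (b x y)^-1 by rewrite invr_gt0.
lra.
Qed.

Lemma is_path_cat x s1 y s2 z :
  is_path b x s1 y -> is_path b y s2 z -> is_path b x (s1 ++ s2) z.
Proof.
move=> [p1 l1] [p2 l2]; split; first by rewrite cat_path p1 l1.
by rewrite last_cat l1.
Qed.

Lemma split_at (x : X) (s : seq X) (z : X) : z \in x :: s ->
  exists s1 s2, s = s1 ++ s2 /\ last x s1 = z.
Proof.
rewrite in_cons => /orP[/eqP ->|zs]; first by exists [::], s.
case/path.splitP: zs => p1 p2; exists (rcons p1 z), p2; split => //.
by rewrite last_rcons.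
Qed.

Lemma size_plen K x s : 0 < K -> (forall u v, b u v <= K) -> path pe x s ->
  (size s)%:R / K <= plen b x s.
Proof.
move=> K0 bK; elim: s x => [|y s IH] x /=; first by rewrite plen_nil mul0r.
move=> /andP[h hp]; rewrite plen_cons.
have h1 : K^-1 <= (b x y)^-1 by rewrite lef_pV2 ?posrE.
have := IH _ hp; rewrite -[(size s).+1]addn1 natrD mulrDl mul1r.
lra.
Qed.

Lemma edge_thr x s L : 0 < L -> path pe x s -> plen b x s <= L ->
  path (fun u v => L^-1 <= b u v) x s.
Proof.
move=> L0; elim: s x => [|y s IH] x //=.
move=> /andP[h hp]; rewrite plen_cons => hle.
have hs := plen_ge0 hp.
have hi : 0 < (b x y)^-1 by rewrite invr_gt0.
apply/andP; split; last by apply: IH => //; lra.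
have : (b x y)^-1 <= L by lra.
by move=> H; rewrite -(invrK (b x y)) lef_pV2 ?posrE ?invr_gt0.
Qed.

Lemma seq_min (T : eqType) (l : seq T) (P : T -> Prop) (f : T -> R) :
  (exists a, a \in l /\ P a) ->
  exists a, [/\ a \in l, P a & forall c, c \in l -> P c -> f a <= f c].
Proof.
elim: l => [|h l IH]; first by case=> a [].
move=> hex.
have [[a' [a'l Pa']]|nex] := pselect (exists a, a \in l /\ P a).
  have [a [al Pa amin]] := IH (ex_intro _ a' (conj a'l Pa')).
  have [Ph|nPh] := pselect (P h).
    have [le|lt] := leP (f h) (f a).
      exists h; split; rewrite ?mem_head //.
      move=> c; rewrite in_cons => /orP[/eqP->//|cl Pc].
      exact: le_trans le (amin _ cl Pc).
    exists a; split; rewrite ?in_cons ?al ?orbT //.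
    move=> c; rewrite in_cons => /orP[/eqP->_|cl Pc]; [exact: ltW|exact: amin].
  exists a; split; rewrite ?in_cons ?al ?orbT //.
  move=> c; rewrite in_cons => /orP[/eqP->//|cl Pc]; exact: amin.
have [Ph|nPh] := pselect (P h).
  exists h; split; rewrite ?mem_head //.
  move=> c; rewrite in_cons => /orP[/eqP->//|cl Pc].
  by exfalso; apply: nex; exists c.
exfalso; case: hex => c [].
rewrite in_cons => /orP[/eqP->//|cl Pc]; by apply: nex; exists c.
Qed.

End Aux.

Section G.
Variables (R : realType) (X : countType) (b : X -> X -> R).
Hypothesis bsym : forall x y, b x y = b y x.
Hypothesis b0 : forall x y, 0 <= b x y.

Lemma gdist_le p s x : is_path b p s x -> gdist b p x <= plen b p s.
Proof.
move=> hp; apply: ge_inf; last by exists s.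
by exists 0 => _ [t ht <-]; exact: plen_ge0 ht.1.
Qed.

Lemma gdist_ge p x c : (exists s, is_path b p s x) ->
  (forall s, is_path b p s x -> c <= plen b p s) -> c <= gdist b p x.
Proof.
move=> [s hs] H; apply: lb_le_inf; first by exists (plen b p s), s.
by move=> _ [t ht <-]; exact: H.
Qed.

Lemma gdist_ge0 p x : (exists s, is_path b p s x) -> 0 <= gdist b p x.
Proof. by move=> h; apply: gdist_ge => // s hs; exact: plen_ge0 hs.1. Qed.

Lemma sum_lb (s : seq X) (f : X -> R) e :
  (forall y, y \in s -> e <= f y) -> (size s)%:R * e <= \sum_(i <- s) f i.
Proof.
elim: s => [|y s IH] H; first by rewrite big_nil mul0r.
rewrite big_cons /= -addn1 natrD mulrDl mul1r.
have h1 := H y (mem_head _ _).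
have h2 : (size s)%:R * e <= \sum_(i <- s) f i.
  by apply: IH => z zs; apply: H; rewrite in_cons zs orbT.
lra.
Qed.

Lemma nbr_fin x e : 0 < e -> (\esum_(y in [set: X]) (b x y)%:E < +oo)%E ->
  finite_set [set y | e <= b x y].
Proof.
move=> e0 hs; apply: contrapT => hinf.
set S := (\esum_(y in [set: X]) (b x y)%:E)%E in hs.
have S0 : (0 <= S)%E by apply: esum_ge0 => y _; rewrite lee_fin.
have Sfin : S = (fine S)%:E by rewrite fineK // ge0_fin_numE.
set r := fine S in Sfin.
pose n := (Num.Def.trunc (r / e)).+1.
have rn : r < n%:R * e.
  by rewrite -ltr_pdivrMr // truncnS_gt.
have [B BA Bn] := infinite_set_fset n hinf.
have : ((n%:R * e)%:E <= S)%E.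
  apply: esum_ge; exists [set` B]; first by split.
  rewrite fsbig_finite // set_fsetK sumEFin lee_fin.
  have := @sum_lb B (b x) e (fun y yB => BA y yB).
  apply: le_trans; apply: ler_wpM2r; [exact: ltW | by rewrite ler_nat].
rewrite -/S Sfin lee_fin; lra.
Qed.

Lemma bound_K m : weighted_graph b m -> cond_B b m -> cond_M m ->
  exists K, 0 < K /\ forall x y, b x y <= K.
Proof.
move=> [_ _ _ hs m0] [C HC] [C2 HC2].
exists (`|C| * `|C2| + 1); split.
  have := normr_ge0 C; have := normr_ge0 C2; nra.
move=> x y.
have hb : ((b x y)%:E <= \esum_(z in [set: X]) (b x z)%:E)%E.
  apply: esum_ge; exists [set y]; first by split.
  by rewrite fsbig_set1.
have : (((m x)^-1 * b x y)%:E <= C%:E)%E.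
  apply: le_trans (HC x); rewrite EFinM; apply: lee_pmul => //.
  by rewrite lee_fin invr_ge0 ltW.
  by rewrite lee_fin.
rewrite lee_fin mulrC ler_pdivrMr // => h.
have := m0 x; have := HC2 x; have := ler_norm C; have := ler_norm C2.
have := b0 x y; have := normr_ge0 C.
nra.
Qed.

End G.

Fixpoint bL (X : countType) (Nb : X -> seq X) (n : nat) (x : X) : seq (X * seq X) :=
  match n with
  | 0 => [:: (x, [::])]
  | n'.+1 => (x, [::]) :: [seq (q, t.1 :: t.2) | t <- bL Nb n' x, q <- Nb t.1]
  end.

Section N.
Variables (R : realType) (X : countType) (b : X -> X -> R).
Hypothesis bsym : forall x y, b x y = b y x.
Hypothesis b0 : forall x y, 0 <= b x y.
Variable K : R.
Hypothesis K0 : 0 < K.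
Hypothesis bK : forall x y, b x y <= K.
Hypothesis hs : forall x, (\esum_(y in [set: X]) (b x y)%:E < +oo)%E.

Lemma bL_spec e (Nb : X -> seq X) (hN : forall y z, e <= b y z -> z \in Nb y)
  n x q s : (size s <= n)%N -> path (fun u v => e <= b u v) q s ->
  last q s = x -> (q, s) \in bL Nb n x.
Proof.
elim: n q s => [|n IH] q [|y s] //=.
- by move=> _ _ ->; rewrite mem_seq1.
- by move=> _ _ ->; rewrite mem_head.
move=> hsz /andP[hqy hp] hl.
have hin := IH y s hsz hp hl.
rewrite in_cons; apply/orP; right.
have hq : q \in Nb (y, s).1 by apply: hN; rewrite /= bsym.
by apply/allpairsPdep; exists (y, s), q.
Qed.

Lemma nearest (S : set X) x q0 s0 : S q0 -> is_path b q0 s0 x ->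
  exists q s, [/\ S q, is_path b q s x &
    forall q' s', S q' -> is_path b q' s' x -> plen b q s <= plen b q' s'].
Proof.
move=> Sq0 hp0.
set L := plen b q0 s0 + 1.
have L0 : 0 < L by have := plen_ge0 hp0.1; rewrite /L; lra.
have [Nb hN] : exists Nb : X -> seq X, forall y z, L^-1 <= b y z -> z \in Nb y.
  have : forall y, exists s : seq X, [set z | L^-1 <= b y z] = [set` s].
    by move=> y; apply/finite_seqP/nbr_fin => //; rewrite invr_gt0.
  case/choice => Nb hNb; exists Nb => y z h.
  have : [set z | L^-1 <= b y z] z by [].
  by rewrite hNb.
pose n := Num.Def.trunc (L * K).
have hsize : forall q s, is_path b q s x -> plen b q s <= L -> (size s <= n)%N.
  move=> q s hp hl; rewrite leqNgt; apply/negP => hlt.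
  have h1 := size_plen K0 bK hp.1.
  have h2 : (size s)%:R <= L * K.
    by rewrite -ler_pdivrMr //; apply: le_trans h1 hl.
  have h3 := truncnS_gt (L * K).
  have : (n.+1)%:R <= (size s)%:R :> R by rewrite ler_nat.
  rewrite -/n in h3; lra.
have hmem : forall q s, is_path b q s x -> plen b q s <= L ->
    (q, s) \in bL Nb n x.
  move=> q s hp hl; apply: (bL_spec hN) (hsize _ _ hp hl) _ hp.2.
  exact: edge_thr (lt_le_trans L0 (le_refl _)) hp.1 hl.
pose P := fun t : X * seq X => [/\ S t.1, is_path b t.1 t.2 x & plen b t.1 t.2 <= L].
have [a [al [Sa hpa hla] amin]] := @seq_min R _ (bL Nb n x) P
   (fun t => plen b t.1 t.2) (ex_intro _ (q0, s0) (conj (hmem _ _ hp0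
      (ltW (ltr_pwDr ltr01 (le_refl _)))) (And3 Sq0 hp0
      (ltW (ltr_pwDr ltr01 (le_refl _)))))).
exists a.1, a.2; split => // q' s' Sq' hp'.
have [hl'|hl'] := leP (plen b q' s') L.
  exact: (amin (q', s') (hmem _ _ hp' hl') (And3 Sq' hp' hl')).
exact: ltW (le_lt_trans hla hl').
Qed.

End N.

Section M.
Variables (R : realType) (X : countType) (b : X -> X -> R).
Hypothesis bsym : forall x y, b x y = b y x.
Hypothesis b0 : forall x y, 0 <= b x y.
Variable K : R.
Hypothesis K0 : 0 < K.
Hypothesis bK : forall x y, b x y <= K.
Hypothesis hs : forall x, (\esum_(y in [set: X]) (b x y)%:E < +oo)%E.
Hypothesis Hc : connected_graph b.

Lemma geodesic p x : exists s, is_path b p s x /\ plen b p s = gdist b p x.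
Proof.
have [s0 hp0] := Hc p x.
have [q [s [/= -> hp hmin]]] := nearest bsym b0 K0 bK hs (S := [set p]) (erefl p) hp0.
exists s; split => //; apply/eqP; rewrite eq_le gdist_le // andbT.
by apply: gdist_ge; [exists s|move=> t ht; exact: hmin].
Qed.

Lemma nearest_center (D : set X) x : D !=set0 ->
  exists q, D q /\ forall q', D q' -> gdist b q x <= gdist b q' x.
Proof.
move=> [q0 Dq0]; have [s0 hp0] := Hc q0 x.
have [q [s [Dq hp hmin]]] := nearest bsym b0 K0 bK hs Dq0 hp0.
exists q; split => // q' Dq'.
apply: le_trans (gdist_le hp) _.
by apply: gdist_ge; [exact: Hc|move=> t ht; exact: hmin].
Qed.

Lemma triangle q z x : gdist b q x <= gdist b q z + gdist b z x.
Proof.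
have [s1 [h1 e1]] := geodesic q z; have [s2 [h2 e2]] := geodesic z x.
rewrite -e1 -e2; have := gdist_le (is_path_cat h1 h2).
by rewrite plen_cat h1.2.
Qed.

Lemma gdist_ge0' p x : 0 <= gdist b p x.
Proof. exact: gdist_ge0. Qed.

Lemma gdist_refl p : gdist b p p = 0.
Proof.
apply/eqP; rewrite eq_le gdist_ge0' andbT.
by have := @gdist_le _ _ b p [::] p (conj erefl erefl); rewrite plen_nil.
Qed.

Lemma gdist0 q p : gdist b q p = 0 -> q = p.
Proof.
have [[|y s] [hp e]] := geodesic q p; first by move=> _; exact: hp.2.
have := plen_gt0 hp.1; rewrite e => h1 h2; move: h1; rewrite h2 ltxx.
done.
Qed.

Lemma minnat (P : nat -> Prop) : (exists k, P k) ->
  exists n, P n /\ forall m, P m -> (n <= m)%N.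
Proof.
move=> [k Pk].
have H : exists k, (fun n => `[< P n >]) k by exists k; apply/asboolP.
case: (ex_minnP H) => n /asboolP Pn nmin; exists n; split => // m Pm.
by apply: nmin; apply/asboolP.
Qed.

Lemma voronoi_exists (D : set X) : D !=set0 -> exists V, voronoi b D V.
Proof.
move=> hD.
pose Near x q := D q /\ forall q', D q' -> gdist b q x <= gdist b q' x.
have hc : forall x, exists c, Near x c /\ forall q, Near x q -> (choice.pickle c <= choice.pickle q)%N.
  move=> x; have [q0 Nq0] := nearest_center x hD.
  have [n [[q [Nq eq]] nmin]] := minnat (P := fun n => exists q, Near x q /\ choice.pickle q = n)
    (ex_intro _ _ (ex_intro _ q0 (conj Nq0 erefl))).
  exists q; split => // q' Nq'; rewrite eq; apply: nmin; by exists q'.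
have [c hcP] := choice hc.
have pinj : injective (@choice.pickle X) := pcan_inj (@choice.pickleK X).
exists (fun p => [set x | c x = p]); split.
- move=> p q _ _ npq; apply/seteqP; split => z //= [h1 h2]; apply: npq.
  by rewrite -h1 -h2.
- move=> p Dp; split.
    have [[Dc hcm] _] := hcP p.
    apply: gdist0; apply/eqP; rewrite eq_le gdist_ge0' andbT.
    by rewrite -(gdist_refl p); exact: hcm.
  move=> x /= cx.
  have [s [hp e]] := geodesic p x.
  exists s; split => // z zin.
  have [s1 [s2 [es lz]]] := split_at zin.
  have hp1 : is_path b p s1 z.
    by split => //; move: hp.1; rewrite es cat_path => /andP[].
  have hp2 : is_path b z s2 x.
    split; last by move: hp.2; rewrite es last_cat lz.
    by move: hp.1; rewrite es cat_path lz => /andP[].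
  have epl : plen b p s1 + plen b z s2 = gdist b p x.
    by rewrite -e es plen_cat lz.
  have d1 := gdist_le hp1; have d2 := gdist_le hp2.
  have [[_ nx] _] := hcP x; rewrite cx in nx.
  have Nzp : Near z p.
    split => // q' Dq'; have := triangle q' z x; have := nx q' Dq'. lra.
  have [[Dcz ncz] czmin] := hcP z.
  have Nxcz : Near x (c z).
    split => // q' Dq'; have := triangle (c z) z x; have := nx q' Dq'.
    have := ncz p Dp; lra.
  have h1 := czmin p Nzp.
  have [_ cxmin] := hcP x; have h2 := cxmin _ Nxcz; rewrite cx in h2.
  by apply: pinj; apply/eqP; rewrite eqn_leq h1 h2.
- by move=> p Dp x /= <- q Dq; have [[_ h] _] := hcP x; exact: h.
- apply/seteqP; split => x // _; exists (c x) => //.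
  by have [[h _] _] := hcP x.
Qed.

End M.

Theorem proposition3p8 (R : realType) (X : countType) (b : X -> X -> R) (m : X -> R)
    (Hg : weighted_graph b m) (Hc : connected_graph b) (HB : cond_B b m) (HM : cond_M m)
    (D : set X) (HD : D !=set0) :
  (exists V : X -> set X, voronoi b D V) /\
  ((Covr b D < +oo)%E ->
   forall V : X -> set X, voronoi b D V ->
   forall p, D p -> V p `<=` gball b p (fine (Covr b D))).
Proof.
have Hg' := Hg; case: Hg' => b0 bsym _ hs _.
have [K [K0 bK]] := bound_K b0 Hg HB HM.
split; first exact: (voronoi_exists bsym b0 K0 bK hs Hc HD).
move=> hfin V [_ _ V2 _] p Dp x Vx; rewrite /gball /=.
have C0 : (0 <= Covr b D)%E.
  by apply: le_ereal_inf_tmp => _ [r [r0 _] <-]; rewrite lee_fin ltW.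
have Cg : ((gdist b p x)%:E <= Covr b D)%E.
  apply: le_ereal_inf_tmp => _ [r [r0 hcov] <-]; rewrite lee_fin.
  have : [set: X] x by [].
  rewrite -hcov => -[q Dq hq].
  exact: le_trans (V2 p Dp x Vx q Dq) hq.
have Cfin : Covr b D \is a fin_num by rewrite ge0_fin_numE.
by rewrite -lee_fin fineK.
Qed.
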